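(* Let $q$ be a self-join-free Boolean conjunctive query. Let $C=F_0\to F_1\to\cdots\to F_{k-1}\to F_0$ be an elementary cycle of length $k\ge 2$ in the M-graph of $q$, and identify $C$ with the set $\{F_0,\dots,F_{k-1}\}$. Let $\mathbf{db}$ be a database. Let $\mathbf{o}$ be a minimal (with respect to $\subseteq$) subset of $\mathbf{db}$ satisfying: (1) $\mathbf{o}$ contains every fact $A$ of $\mathbf{db}$ with $\mathrm{atom}(A)\in\{F_0,\dots,F_{k-1}\}$ that has outdegree zero in the $\hookrightarrow_C$-graph; (2) $\mathbf{o}$ contains every fact belonging to some irrelevant $1$-embedding of $C$ in $\mathbf{db}$; (3) $\mathbf{o}$ contains every fact belonging to some $n$-embedding of $C$ in $\mathbf{db}$ with $n\ge 2$; (4) if $\mathbf{o}$ contains some fact of a relevant $1$-embedding of $C$ in $\mathbf{db}$, then $\mathbf{o}$ contains every fact of that $1$-embedding; and (5) if $\mathbf{o}$ contains a fact $A$, then $\mathbf{o}$ includes the block of $A$ in $\mathbf{db}$. Then $\mathbf{o}$ is the maximal garbage set for $C$ in $\mathbf{db}$.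
   Context: Every relation name has a signature $[n,k]$ ($1\le k\le n$; primary-key positions $1,\dots,k$) and a mode in $\{\mathsf{c},\mathsf{i}\}$. For an atom $F$, $\mathrm{key}(F)$ = variables at primary-key positions, $\mathrm{vars}(F)$ = all its variables. Facts are variable-free atoms; key-equal facts share relation name and primary-key values. A database is a finite set of facts with no two distinct key-equal facts of mode $\mathsf{c}$, all of whose relation names occur in $q$; the block of $A$ in $\mathbf{db}$ is the set of facts of $\mathbf{db}$ key-equal to $A$; a repair is a maximal subset without two distinct key-equal facts. A self-join-free Boolean conjunctive query is a finite set of atoms with distinct relation names; $\mathrm{atom}(A)$ is the atom of $q$ with the relation name of fact $A$. $\mathcal{K}(p)=\{\mathrm{key}(F)\to\mathrm{vars}(F)\mid F\in p\}$; $q^{\mathsf{c}}$ = atoms of $q$ of mode $\mathsf{c}$. M-graph of $q$: vertices atoms of $q$, edge $F\to G$ ($F\ne G$) iff $\mathcal{K}(q^{\mathsf{c}})\models\mathrm{vars}(F)\to\mathrm{key}(G)$. $\hookrightarrow$-graph: vertices facts of $\mathbf{db}$, edge $A\hookrightarrow B$ iff there are a valuation $\theta$ of the variables of $q$ and an M-graph edge $F\to G$ with $\theta(q)\subseteq\mathbf{db}$, $A=\theta(F)$, $B$ key-equal to $\theta(G)$. The $\hookrightarrow_C$-graph: vertices the facts $A\in\mathbf{db}$ with $\mathrm{atom}(A)$ in $C$, edge $A\hookrightarrow_C B$ iff $A\hookrightarrow B$ and $C$ has an edge from $\mathrm{atom}(A)$ to $\mathrm{atom}(B)$. An $n$-embedding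 of $C$ in $\mathbf{db}$ is an elementary $\hookrightarrow_C$-cycle of length $nk$ containing no two distinct key-equal facts. A $1$-embedding is relevant if some valuation $\theta$ with $\theta(q)\subseteq\mathbf{db}$ has all facts of the $1$-embedding in $\theta(q)$; otherwise irrelevant. A subset $\mathbf{o}\subseteq\mathbf{db}$ is a garbage set for $q_0\subseteq q$ in $\mathbf{db}$ if (1) for every $A\in\mathbf{o}$, $\mathrm{atom}(A)\in q_0$ and the block of $A$ is included in $\mathbf{o}$; and (2) there is a repair $\mathbf{r}$ of $\mathbf{o}$ such that for every valuation $\theta$ of the variables of $q$, if $\theta(q)\subseteq(\mathbf{db}\setminus\mathbf{o})\cup\mathbf{r}$ then $\theta(q_0)\cap\mathbf{r}=\emptyset$. Garbage sets are closed under union; the maximal garbage set is the largest one. *)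

(* Defs.v *)
From mathcomp Require Import all_boot.
Set Implicit Arguments. Unset Strict Implicit. Unset Printing Implicit Defensive.

Record schema (R : eqType) := Schema {
  ar : R -> nat;
  kl : R -> nat;      (* number k of primary-key positions 1..k *)
  modec : R -> bool   (* true = mode c, false = mode i *)
}.

Definition schema_ok (R : eqType) (S : schema R) : Prop :=
  forall r : R, 1 <= kl S r <= ar S r.

Section DB.
Variables (V D R : eqType) (S : schema R).

(* terms: variables (inl) or constants (inr) *)
Definition term := (V + D)%type.
Definition atom := (R * seq term)%type.
Definition fact := (R * seq D)%type.

Definition arel (F : atom) : R := F.1.
Definition aargs (F : atom) : seq term := F.2.
Definition frel (A : fact) : R := A.1.
Definition fargs (A : fact) : seq D := A.2.

Definition vars_of (s : seq term) : seq V :=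
  pmap (fun t : term => if t is inl x then Some x else None) s.
Definition vars (F : atom) : seq V := vars_of (aargs F).
Definition key (F : atom) : seq V := vars_of (take (kl S (arel F)) (aargs F)).

Definition wf_atom (F : atom) : bool := size (aargs F) == ar S (arel F).
Definition wf_fact (A : fact) : bool := size (fargs A) == ar S (frel A).

Definition sjf_query (q : seq atom) : Prop :=
  all wf_atom q /\ uniq (map arel q).

Definition keyeq (A B : fact) : bool :=
  (frel A == frel B) &&
  (take (kl S (frel A)) (fargs A) == take (kl S (frel A)) (fargs B)).

Definition database (q : seq atom) (db : seq fact) : Prop :=
  (forall A, A \in db -> wf_fact A /\ frel A \in map arel q) /\
  (forall A B, A \in db -> B \in db -> keyeq A B -> modec S (frel A) -> A = B).

Definition inst (th : V -> D) (F : atom) : fact :=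
  (arel F, map (fun t : term => match t with inl x => th x | inr d => d end)
               (aargs F)).

Definition embeds_in (q : seq atom) (th : V -> D) (P : fact -> Prop) : Prop :=
  forall H, H \in q -> P (inst th H).

(* Functional dependencies X -> Y as pairs; attribute closure *)
Inductive fd_closure (K : seq (seq V * seq V)) (X : seq V) : V -> Prop :=
| fdc_base x : x \in X -> fd_closure K X x
| fdc_step L Y y : (L, Y) \in K -> (forall z, z \in L -> fd_closure K X z) ->
    y \in Y -> fd_closure K X y.

Definition fd_implies (K : seq (seq V * seq V)) (X Y : seq V) : Prop :=
  forall y, y \in Y -> fd_closure K X y.

Definition Kc (q : seq atom) : seq (seq V * seq V) :=
  [seq (key H, vars H) | H <- q & modec S (arel H)].

Definition medge (q : seq atom) (F G : atom) : Prop :=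
  F \in q /\ G \in q /\ F <> G /\ fd_implies (Kc q) (vars F) (key G).

Fixpoint pathP (T : Type) (e : T -> T -> Prop) (x : T) (s : seq T) : Prop :=
  match s with
  | [::] => True
  | y :: s' => e x y /\ pathP e y s'
  end.
Definition cycleP (T : Type) (e : T -> T -> Prop) (s : seq T) : Prop :=
  match s with
  | [::] => True
  | x :: s' => pathP e x (rcons s' x)
  end.

(* c = [:: F_0; ...; F_{k-1}] is an elementary cycle of the M-graph *)
Definition elem_mcycle (q : seq atom) (c : seq atom) : Prop :=
  uniq c /\ {subset c <= q} /\ cycleP (medge q) c.

Definition hook (q : seq atom) (db : seq fact) (A B : fact) : Prop :=
  B \in db /\
  exists th F G, embeds_in q th (fun X => X \in db) /\ medge q F G /\
    A = inst th F /\ keyeq B (inst th G).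

Definition atom_in (c : seq atom) (A : fact) : bool :=
  has (fun F => arel F == frel A) c.

(* A |->_C B  (C given as its sequence of atoms; cycle edges are F -> next c F) *)
Definition hookC (q c : seq atom) (db : seq fact) (A B : fact) : Prop :=
  A \in db /\ atom_in c A /\ B \in db /\ atom_in c B /\ hook q db A B /\
  exists F, F \in c /\ arel F = frel A /\ arel (next c F) = frel B.

Definition embedding (q c : seq atom) (db : seq fact) (n : nat) (e : seq fact)
  : Prop :=
  uniq e /\ size e = n * size c /\ 0 < size e /\
  (forall A, A \in e -> A \in db /\ atom_in c A) /\
  cycleP (hookC q c db) e /\
  (forall A B, A \in e -> B \in e -> keyeq A B -> A = B).

Definition relevant (q : seq atom) (db : seq fact) (e : seq fact) : Prop :=
  exists th, embeds_in q th (fun X => X \in db) /\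
    forall A, A \in e -> exists2 F, F \in q & A = inst th F.

Definition consistent (r : seq fact) : Prop :=
  forall A B, A \in r -> B \in r -> keyeq A B -> A = B.

Definition repair (o r : seq fact) : Prop :=
  {subset r <= o} /\ consistent r /\
  forall r', {subset r <= r'} -> {subset r' <= o} -> consistent r' ->
    {subset r' <= r}.

Definition garbage (q q0 : seq atom) (db o : seq fact) : Prop :=
  {subset o <= db} /\
  (forall A, A \in o -> atom_in q0 A /\
     (forall B, B \in db -> keyeq A B -> B \in o)) /\
  exists r, repair o r /\
    forall th : V -> D,
      embeds_in q th (fun X => (X \in db /\ X \notin o) \/ X \in r) ->
      forall F, F \in q0 -> inst th F \notin r.

Definition max_garbage (q q0 : seq atom) (db o : seq fact) : Prop :=
  garbage q q0 db o /\ forall o', garbage q q0 db o' -> {subset o' <= o}.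

Definition conds (q c : seq atom) (db o : seq fact) : Prop :=
  {subset o <= db} /\
  (forall A, A \in db -> atom_in c A ->
     (forall B, ~ hookC q c db A B) -> A \in o) /\
  (forall e, embedding q c db 1 e -> ~ relevant q db e ->
     {subset e <= o}) /\
  (forall n e, 2 <= n -> embedding q c db n e -> {subset e <= o}) /\
  (forall e, embedding q c db 1 e -> relevant q db e ->
     has (fun A => A \in o) e -> {subset e <= o}) /\
  (forall A, A \in o -> forall B, B \in db -> keyeq A B -> B \in o).

Definition minimal_conds (q c : seq atom) (db o : seq fact) : Prop :=
  conds q c db o /\
  forall o', {subset o' <= o} -> conds q c db o' -> {subset o <= o'}.

End DB.

(* Main.v *)
Require Import Defs.
From mathcomp Require Import all_boot zify.
From Stdlib Require Import ClassicalEpsilon Classical.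
Import Defs.
Set Implicit Arguments. Unset Strict Implicit. Unset Printing Implicit Defensive.

Definition asb (P : Prop) : bool :=
  if excluded_middle_informative P then true else false.
Lemma asbP (P : Prop) : reflect P (asb P).
Proof. rewrite /asb; case: excluded_middle_informative => h; by constructor. Qed.

Section Gen.
Variable T : eqType.
Implicit Types (e : T -> T -> Prop).

Lemma pathP_path e x s : pathP e x s <-> path (fun a b => asb (e a b)) x s.
Proof.
elim: s x => [|y s IH] x /=; first by split.
split.
  by case=> h1 /IH h2; rewrite h2 andbT; apply/asbP.
by case/andP=> /asbP h1 /IH h2.
Qed.

Lemma cycleP_cycle e s : cycleP e s <-> cycle (fun a b => asb (e a b)) s.
Proof. case: s => [|x s] //=; exact: pathP_path. Qed.

Lemma cycleP_next e s x : cycleP e s -> uniq s -> x \in s -> e x (next s x).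
Proof.
move=> /cycleP_cycle h u xs; apply/asbP; exact: next_cycle h xs.
Qed.

Lemma pathP_mono e e' x s :
  (forall a b, a \in x :: s -> b \in s -> e a b -> e' a b) ->
  pathP e x s -> pathP e' x s.
Proof.
elim: s x => [|y s IH] x //= H [h1 h2]; split.
  by apply: H => //; rewrite ?inE eqxx ?orbT.
apply: IH h2 => a b ha hb; apply: H.
  by move: ha; rewrite !inE => /orP[->|->]; rewrite ?orbT.
by rewrite inE hb orbT.
Qed.

Lemma cycleP_mono e e' s :
  (forall a b, a \in s -> b \in s -> e a b -> e' a b) ->
  cycleP e s -> cycleP e' s.
Proof.
case: s => [|x s] //= H; apply: pathP_mono => a b ha hb; apply: H.
  by move: ha; rewrite !inE mem_rcons inE => /orP[->|->]; rewrite ?orbT.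
by rewrite -mem_rcons.
Qed.

Lemma cycle_next_P (s : seq T) : uniq s -> cycleP (fun a b => b = next s a) s.
Proof.
move=> u; apply/cycleP_cycle; have := cycle_next u.
apply: sub_cycle => a b /eqP <-; by apply/asbP.
Qed.

End Gen.

Lemma pathP_map (T1 T2 : Type) (f : T1 -> T2) (e : T2 -> T2 -> Prop) x s :
  pathP e (f x) (map f s) <-> pathP (fun a b => e (f a) (f b)) x s.
Proof. elim: s x => [|y s IH] x //=; split; case=> h1 /IH h2; by split. Qed.

Lemma cycleP_map (T1 T2 : Type) (f : T1 -> T2) (e : T2 -> T2 -> Prop) s :
  cycleP e (map f s) <-> cycleP (fun a b => e (f a) (f b)) s.
Proof. case: s => [|x s] //=; rewrite -map_rcons; exact: pathP_map. Qed.

Lemma split_first (T : Type) (p : pred T) s : has p s ->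
  exists pre x post, s = pre ++ x :: post /\ p x /\ ~~ has p pre.
Proof.
elim: s => [|y s IH] //= /orP[py|hs].
  by exists [::], y, s.
case py : (p y); first by exists [::], y, s.
have [pre [x [post [e [px np]]]]] := IH hs.
by exists (y :: pre), x, post; rewrite e /= py.
Qed.

Lemma reach_cycle (T : eqType) (Rc : T -> T -> Prop) :
  (forall a b d, Rc a b -> Rc b d -> Rc a d) ->
  forall n (U : seq T), size U <= n ->
  (forall t, t \in U -> exists2 t', t' \in U & Rc t t') ->
  forall t0, t0 \in U -> exists2 t, t \in U & Rc t t.
Proof.
move=> tr; elim=> [|n IH] U.
  by rewrite leqn0 => /nilP -> _ t0.
move=> hs H t0 t0U.
case: (asbP (Rc t0 t0)) => [h|nh]; first by exists t0.
suff [t tU' rt] : exists2 t, t \in [seq u <- U | asb (Rc t0 u)] & Rc t t.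
  by exists t => //; move: tU'; rewrite mem_filter => /andP[].
pose U' := [seq u <- U | asb (Rc t0 u)].
have [t1 t1U r1] := H t0 t0U.
apply: (IH U' _ _ t1).
- have : count (predC (fun u => asb (Rc t0 u))) U > 0.
    rewrite -has_count; apply/hasP; exists t0 => //=; by apply/asbP.
  move: (count_predC (fun u => asb (Rc t0 u)) U); rewrite /U' size_filter.
  move: hs; lia.
- move=> u; rewrite mem_filter => /andP[/asbP h uU].
  have [u' u'U r'] := H u uU; exists u' => //.
  by rewrite mem_filter u'U andbT; apply/asbP; apply: tr r'.
- by rewrite mem_filter t1U andbT; apply/asbP.
Qed.

Lemma nodecomp (T : eqType) (kq : rel T) (w : seq T) :
  (forall a, kq a a) -> (forall a b, kq a b -> kq b a) ->
  ~ (exists a b d A B, w = a ++ A :: b ++ B :: d /\ kq A B) ->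
  uniq w /\ (forall A B, A \in w -> B \in w -> kq A B -> A = B).
Proof.
move=> rf sy nd; split.
  elim: w nd => [|x w IH] //= nd; apply/andP; split.
    apply/negP => xw; apply: nd; case/splitPr: xw => w1 w2.
    by exists [::], w1, w2, x, x.
  apply: IH => -[a [b [d [A [B [e k]]]]]]; apply: nd.
  by exists (x :: a), b, d, A, B; rewrite e.
move=> A B hA hB k; apply: NNPP => nAB; apply: nd.
case/splitPr: hA hB => w1 w2; rewrite mem_cat inE => /orP[hB|/orP[/eqP eB|hB]].
- case/splitPr: hB => w3 w4; exists w3, w4, w2, B, A; split; last exact: sy.
  by rewrite -catA.
- by case: nAB.
- case/splitPr: hB => w3 w4; by exists w1, w3, w4, A, B.
Qed.

Section PropS.
Variable T : eqType.
Lemma path_fwd_last (e : T -> T -> Prop) (Q : T -> Prop) x t :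
  pathP e x t -> (forall a b, a \in x :: t -> b \in x :: t -> e a b -> Q a -> Q b) ->
  forall y, y \in x :: t -> Q y -> Q (last x t).
Proof.
elim: t x => [|z t IH] x /=.
  by move=> _ _ y; rewrite inE => /eqP->.
move=> [exz p] H y; rewrite inE => /orP[/eqP->|hy] Qy.
  apply: (IH z p _ z (mem_head _ _)).
    by move=> a b ha hb; apply: H; rewrite inE ?ha ?hb orbT.
  by apply: H exz Qy; rewrite ?mem_head // inE mem_head orbT.
apply: (IH z p _ y hy Qy).
by move=> a b ha hb; apply: H; rewrite inE ?ha ?hb orbT.
Qed.

Lemma path_fwd_all (e : T -> T -> Prop) (Q : T -> Prop) x t :
  pathP e x t -> (forall a b, a \in x :: t -> b \in x :: t -> e a b -> Q a -> Q b) ->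
  Q x -> forall y, y \in x :: t -> Q y.
Proof.
elim: t x => [|z t IH] x /=.
  by move=> _ _ Qx y; rewrite inE => /eqP->.
move=> [exz p] H Qx y; rewrite inE => /orP[/eqP->//|hy].
apply: (IH z p _ _ y hy).
  by move=> a b ha hb; apply: H; rewrite inE ?ha ?hb orbT.
by apply: H exz Qx; rewrite ?mem_head // inE mem_head orbT.
Qed.

Lemma cycle_fwd (e : T -> T -> Prop) (Q : T -> Prop) s :
  cycleP e s -> (forall a b, a \in s -> b \in s -> e a b -> Q a -> Q b) ->
  forall y, y \in s -> Q y -> forall z, z \in s -> Q z.
Proof.
case: s => [|x s] //= p H y hy Qy z hz.
have H' : forall a b, a \in x :: rcons s x -> b \in x :: rcons s x -> e a b -> Q a -> Q b.
  move=> a b ha hb; apply: H.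
    by move: ha; rewrite !inE mem_rcons inE => /orP[->|->]; rewrite ?orbT.
  by move: hb; rewrite !inE mem_rcons inE => /orP[->|->]; rewrite ?orbT.
have hy' : y \in x :: rcons s x by rewrite inE mem_rcons hy orbT.
have := path_fwd_last p H' hy' Qy; rewrite last_rcons => Qx.
apply: (path_fwd_all p H' Qx); by rewrite inE mem_rcons hz orbT.
Qed.
End PropS.

Lemma count_le_in (T : eqType) (p p' : pred T) s :
  (forall x, x \in s -> p' x -> p x) -> count p' s <= count p s.
Proof.
elim: s => //= y s IH H; apply: leq_add.
  have := H y (mem_head _ _); case: (p' y); case: (p y) => //; by move/(_ isT).
by apply: IH => x hx; apply: H; rewrite inE hx orbT.
Qed.

Lemma sub_count_lt (T : eqType) (p p' : pred T) s :
  (forall x, x \in s -> p' x -> p x) -> (exists2 x, x \in s & p x && ~~ p' x) ->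
  count p' s < count p s.
Proof.
elim: s => [|y s IH] H [x] //; rewrite inE => /orP[/eqP->|hx] px /=.
  case/andP: px => -> /negbTE ->; rewrite add0n add1n ltnS.
  by apply: count_le_in => z hz; apply: H; rewrite inE hz orbT.
rewrite -addn1 -addnA addn1; apply: leq_add.
  have := H y (mem_head _ _); case: (p' y); case: (p y) => //; by move/(_ isT).
apply: IH; last by exists x.
by move=> z hz; apply: H; rewrite inE hz orbT.
Qed.

Section L19.
Variables (V D R : eqType) (S : schema R) (q c : seq (atom V D R))
  (db : seq (fact D R)).
Hypothesis Hsjf : sjf_query S q.
Hypothesis Hc2 : 2 <= size c.
Hypothesis Hcyc : elem_mcycle S q c.
Hypothesis Hdb : database S q db.

Local Notation fct := (fact D R).
Local Notation atm := (atom V D R).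
Implicit Types (F G H : atm) (A B : fct) (th : V -> D).

Definition ev (th : V -> D) (t : term V D) : D :=
  match t with inl x => th x | inr d => d end.

Lemma inst_args th F : fargs (inst th F) = map (ev th) (aargs F).
Proof. by []. Qed.
Lemma inst_rel th F : frel (inst th F) = arel F.
Proof. by []. Qed.

Lemma keyeq_refl A : keyeq S A A.
Proof. by rewrite /keyeq !eqxx. Qed.
Lemma keyeq_rel A B : keyeq S A B -> frel A = frel B.
Proof. by case/andP=> /eqP. Qed.
Lemma keyeq_sym A B : keyeq S A B -> keyeq S B A.
Proof.
rewrite /keyeq => /andP[/eqP e /eqP e2].
have e2' : take (kl S (frel A)) (fargs A) = take (kl S (frel A)) (fargs B) := e2.
rewrite -e; apply/andP; split; apply/eqP => //.
Qed.
Lemma keyeq_trans A B C : keyeq S A B -> keyeq S B C -> keyeq S A C.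
Proof.
case/andP=> /eqP e1 /eqP e2; case/andP=> /eqP e3 /eqP e4.
have e2' : take (kl S (frel A)) (fargs A) = take (kl S (frel A)) (fargs B) := e2.
have e4' : take (kl S (frel B)) (fargs B) = take (kl S (frel B)) (fargs C) := e4.
rewrite /keyeq e1 e3 eqxx /=; apply/eqP; rewrite -e3 -e1 e2' e1 e4' //.
Qed.

Lemma vars_of_l x (s : seq (term V D)) : vars_of (inl x :: s) = x :: vars_of s.
Proof. by []. Qed.
Lemma vars_of_r d (s : seq (term V D)) : vars_of (inr d :: s) = vars_of s.
Proof. by []. Qed.

Lemma map_ev_eq th th' (s : seq (term V D)) :
  (forall x, x \in vars_of s -> th x = th' x) -> map (ev th) s = map (ev th') s.
Proof.
elim: s => [|t s IH] // H; case: t H => [x|d] H /=.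
  have -> : th x = th' x by apply: H; rewrite vars_of_l inE eqxx.
  by rewrite IH // => y hy; apply: H; rewrite vars_of_l inE hy orbT.
by rewrite IH // => y hy; apply: H; rewrite vars_of_r.
Qed.

Lemma map_ev_agree th th' (s : seq (term V D)) :
  map (ev th) s = map (ev th') s -> forall x, x \in vars_of s -> th x = th' x.
Proof.
elim: s => [|t s IH] H x; first by rewrite in_nil.
case: t H => [y [e1 e2]|d [e2]] hx.
  by move: hx; rewrite vars_of_l inE => /orP[/eqP->|]; [exact: e1|apply: IH].
by move: hx; rewrite vars_of_r; apply: IH.
Qed.

Lemma inst_agree th th' F : inst th F = inst th' F ->
  forall x, x \in vars F -> th x = th' x.
Proof. by case=> h; apply: map_ev_agree. Qed.

Lemma key_agree th th' F : (forall x, x \in key S F -> th x = th' x) ->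
  keyeq S (inst th F) (inst th' F).
Proof.
move=> H; rewrite /keyeq eqxx /=; apply/eqP.
change (take (kl S (arel F)) (map (ev th) (aargs F)) = take (kl S (arel F)) (map (ev th') (aargs F))).
by rewrite -!map_take (map_ev_eq H).
Qed.

Lemma sjf_eq F G : F \in q -> G \in q -> arel F = arel G -> F = G.
Proof.
case: Hsjf => _; elim: q => [|H q' IH] //= /andP[nH u].
rewrite !inE => /orP[/eqP->|hF] /orP[/eqP->|hG] e //.
- by move: nH; rewrite e (map_f (@arel _ _ _) hG).
- by move: nH; rewrite -e (map_f (@arel _ _ _) hF).
- exact: IH.
Qed.

Lemma c_sub : {subset c <= q}.
Proof. by case: Hcyc => _ []. Qed.
Lemma c_uniq : uniq c.
Proof. by case: Hcyc. Qed.

Lemma atom_inP A : reflect (exists2 F, F \in c & arel F = frel A) (atom_in c A).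
Proof. apply: (iffP hasP) => -[F h1 /eqP h2]; by exists F. Qed.

Lemma atom_in_inst th F : F \in c -> atom_in c (inst th F).
Proof. by move=> h; apply/atom_inP; exists F. Qed.

Lemma c_eq F G : F \in c -> G \in c -> arel F = arel G -> F = G.
Proof. by move=> h1 h2; apply: sjf_eq; apply: c_sub. Qed.

Lemma inst_eq_atom th th' F G : F \in q -> G \in q -> inst th F = inst th' G -> F = G.
Proof. by move=> h1 h2 [e _]; apply: sjf_eq. Qed.

Lemma next_medge F : F \in c -> medge S q F (next c F).
Proof. case: Hcyc => u [_ h]; exact: cycleP_next. Qed.

Lemma next_in F : F \in c -> next c F \in c.
Proof. by rewrite mem_next. Qed.

Definition mtch th := embeds_in q th (fun X => X \in db).

Local Notation hC := (hookC S q c db).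

Lemma fd_agree th th' X y : mtch th -> mtch th' ->
  fd_closure (Kc S q) X y -> (forall x, x \in X -> th x = th' x) -> th y = th' y.
Proof.
move=> m1 m2; elim=> [x hx H|L Y z hLY _ IH hz H]; first exact: H.
move: hLY; rewrite /Kc => /mapP[G]; rewrite mem_filter => /andP[mc Gq] [eL eY].
subst L Y.
have k := key_agree (fun x hx => IH x hx H).
have e : inst th G = inst th' G.
  case: Hdb => _ h; apply: h => //; [exact: m1|exact: m2].
exact: inst_agree e z hz.
Qed.

Lemma hookC_data A B : hC A B ->
  [/\ A \in db, atom_in c A, B \in db, atom_in c B &
  exists th F, [/\ mtch th, F \in c, A = inst th F & keyeq S B (inst th (next c F))]].
Proof.
case=> hA [aA [hB [aB [[_ [th [F [G [m [me [eA kB]]]]]]] [F0 [F0c [e1 e2]]]]]]].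
split => //; exists th, F0.
have eF : F = F0.
  apply: sjf_eq; [by case: me|exact: c_sub|by rewrite e1 eA].
have eG : G = next c F0.
  apply: sjf_eq; [by case: me => _ []|exact/c_sub/next_in|].
  by rewrite e2 (keyeq_rel kB).
by subst; split.
Qed.

Lemma hook_unique A B B' : hC A B -> hC A B' -> keyeq S B B'.
Proof.
case/hookC_data=> _ _ _ _ [th [F [m Fc eA kB]]].
case/hookC_data=> _ _ _ _ [th' [F' [m' Fc' eA' kB']]].
have eF : F = F' by apply: c_eq => //; rewrite -(inst_rel th F) -eA eA'.
subst F'.
have ag : forall x, x \in vars F -> th x = th' x by apply: inst_agree; rewrite -eA.
have k : keyeq S (inst th (next c F)) (inst th' (next c F)).
  apply: key_agree => x hx.
  case: (next_medge Fc) => _ [_ [_ fd]].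
  exact: fd_agree m m' (fd x hx) ag.
apply: keyeq_trans kB (keyeq_trans k (keyeq_sym kB')).
Qed.

Lemma hookC_keyeq A B B' : hC A B -> B' \in db -> keyeq S B B' -> hC A B'.
Proof.
case=> hA [aA [hB [aB [[_ [th [F [G [m [me [eA kB]]]]]]] [F0 [F0c [e1 e2]]]]]]] hB' k.
have er := keyeq_rel k.
split=> //; split=> //; split=> //; split; first by rewrite /atom_in -er.
split; last by exists F0; rewrite -er.
split=> //; exists th, F, G; do 3 (split=> //).
exact: keyeq_trans (keyeq_sym k) kB.
Qed.

Lemma match_hookC th F : mtch th -> F \in c ->
  hC (inst th F) (inst th (next c F)).
Proof.
move=> m Fc; have Nc := next_in Fc.
have d1 : inst th F \in db by apply: m; apply: c_sub.
have d2 : inst th (next c F) \in db by apply: m; apply: c_sub.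
split=> //; split; first exact: atom_in_inst.
split=> //; split; first exact: atom_in_inst.
split; last by exists F.
split=> //; exists th, F, (next c F); split=> //; split.
  exact: (next_medge Fc).
by split=> //; apply: keyeq_refl.
Qed.

Lemma inst_inj th : {in c &, injective (inst th)}.
Proof. move=> F G hF hG; apply: inst_eq_atom; exact: c_sub. Qed.

Lemma match_emb th : mtch th ->
  embedding S q c db 1 (map (inst th) c) /\ relevant q db (map (inst th) c).
Proof.
move=> m; split; last first.
  exists th; split=> // A /mapP[F hF ->]; exists F => //; exact: c_sub.
split; first by rewrite map_inj_in_uniq ?c_uniq //; apply: inst_inj.
split; first by rewrite size_map mul1n.
split; first by rewrite size_map; apply: leq_trans Hc2.
split.
  move=> A /mapP[F hF ->]; split; [apply: m; exact: c_sub|exact: atom_in_inst].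
split.
  apply/cycleP_map; apply: cycleP_mono (cycle_next_P c_uniq).
  by move=> a b ha hb ->; apply: match_hookC.
move=> A B /mapP[F hF ->] /mapP[G hG ->] /keyeq_rel e.
by rewrite (c_eq hF hG e).
Qed.



Definition idx A := index (frel A) (map (@arel V D R) c).

Lemma idx_atom F : F \in c -> index (arel F) (map (@arel V D R) c) = index F c.
Proof.
have : uniq (map (@arel V D R) c).
  case: Hsjf => _ u; rewrite (map_inj_in_uniq (f := @arel V D R)) ?c_uniq //.
  by move=> a b ha hb; apply: c_eq.
elim: c => [|G s IH] //= /andP[nG u]; rewrite inE => /orP[/eqP->|hF].
  by rewrite /= !eqxx.
rewrite /=; case: eqP => [e|_]; first by move: nG; rewrite e (map_f (@arel _ _ _) hF).
case: eqP => [e|_]; first by move: nG; rewrite e (map_f (@arel _ _ _) hF).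
by rewrite IH.
Qed.

Lemma index_next F : F \in c -> index (next c F) c = (index F c).+1 %% size c.
Proof.
move=> Fc; have u := c_uniq; rewrite next_nth Fc.
case E: c Fc u => [|y p] // Fc u.
set i := index F (y :: p).
have : i < size (y :: p) by rewrite index_mem.
rewrite [size _]/= ltnS leq_eqVlt => /orP[/eqP e|lt].
  rewrite e nth_default // modnn; by rewrite /= eqxx.
rewrite modn_small; last by rewrite /= ltnS.
have -> : nth y p i = nth y (y :: p) i.+1 by [].
by rewrite index_uniq.
Qed.

Lemma idx_lt A : atom_in c A -> idx A < size c.
Proof.
case/atom_inP=> F Fc e; rewrite /idx -e idx_atom // index_mem //.
Qed.

Lemma hC_idx A B : hC A B -> idx B = (idx A).+1 %% size c.
Proof.
case=> _ [_ [_ [_ [_ [F0 [F0c [e1 e2]]]]]]].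
by rewrite /idx -e1 -e2 !idx_atom ?next_in // index_next.
Qed.

Lemma path_idx (e : rel fct) x s : (forall a b, e a b -> hC a b) ->
  atom_in c x -> path e x s -> idx (last x s) = (idx x + size s) %% size c.
Proof.
move=> h; elim: s x => [|y s IH] x ax /=.
  by rewrite addn0 modn_small // idx_lt.
case/andP=> /h hxy p.
have ay : atom_in c y by case: hxy => _ [_ [_ []]].
rewrite IH // (hC_idx hxy) modnDml addSnnS //.
Qed.



Section WithO.
Variable o : seq fct.
Hypothesis Hmin : minimal_conds S q c db o.

Lemma o_db : {subset o <= db}.
Proof. by case: Hmin => -[]. Qed.
Lemma o_1 A : A \in db -> atom_in c A -> (forall B, ~ hC A B) -> A \in o.
Proof. by case: Hmin => -[_ [h _]] _; apply: h. Qed.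
Lemma o_2 e : embedding S q c db 1 e -> ~ relevant q db e -> {subset e <= o}.
Proof. by case: Hmin => -[_ [_ [h _]]] _; apply: h. Qed.
Lemma o_3 n e : 2 <= n -> embedding S q c db n e -> {subset e <= o}.
Proof. by case: Hmin => -[_ [_ [_ [h _]]]] _; apply: h. Qed.
Lemma o_4 e : embedding S q c db 1 e -> relevant q db e ->
  has (fun A => A \in o) e -> {subset e <= o}.
Proof. by case: Hmin => -[_ [_ [_ [_ [h _]]]]] _; apply: h. Qed.
Lemma o_5 A B : A \in o -> B \in db -> keyeq S A B -> B \in o.
Proof. move=> hA hB k; case: Hmin => -[_ [_ [_ [_ [_ h]]]]] _; exact: h hA B hB k. Qed.

Lemma match_o th F : mtch th -> F \in c -> inst th F \in o ->
  forall G, G \in c -> inst th G \in o.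
Proof.
move=> m Fc hF G Gc; have [em rel] := match_emb m.
apply: (o_4 em rel); last exact: map_f.
by apply/hasP; exists (inst th F) => //; apply: map_f.
Qed.

Lemma repair_cover (g r : seq fct) A : repair S g r -> A \in g ->
  exists2 B, B \in r & keyeq S A B.
Proof.
move=> [sr [cr mr]] Ag.
case: (classic (exists2 B, B \in r & keyeq S A B)) => // nB.
have : A \in r.
  apply: (mr (A :: r)); rewrite ?inE ?eqxx //.
  - by move=> x hx; rewrite inE hx orbT.
  - by move=> x; rewrite inE => /orP[/eqP->|/sr].
  move=> X Y; rewrite !inE => /orP[/eqP->|hX] /orP[/eqP->|hY] k //.
  - by case: nB; exists Y.
  - by case: nB; exists X => //; apply: keyeq_sym.
  - exact: cr.
by move=> Ar; exists A => //; apply: keyeq_refl.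
Qed.

Section Max.
Variables (g r : seq fct).
Hypothesis Hgdb : {subset g <= db}.
Hypothesis Hgc : forall A, A \in g -> atom_in c A /\
     (forall B, B \in db -> keyeq S A B -> B \in g).
Hypothesis Hr : repair S g r.
Hypothesis Hth : forall th : V -> D,
      embeds_in q th (fun X => (X \in db /\ X \notin g) \/ X \in r) ->
      forall F, F \in c -> inst th F \notin r.

Definition Tt t := (t \in r) && (t \notin o).
Definition Wb Y := [&& Y \in db, Y \notin o & (Y \in r) || (Y \notin g)].
Definition Eb a b := asb (hC a b /\ Wb a /\ Wb b).

Lemma r_g : {subset r <= g}.
Proof. by case: Hr. Qed.

Lemma step t : Tt t -> exists s, [/\ path Eb t s, s != [::] & Tt (last t s)].
Proof.
case/andP=> tr to.
have tg := r_g tr; have tdb := Hgdb tg; have [tc _] := Hgc tg.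
have [B hB] : exists B, hC t B.
  apply: NNPP => nB; move: to; rewrite (o_1 tdb tc) // => B hB; apply: nB; by exists B.
have [_ _ _ _ [th [F [m Fc et kB]]]] := hookC_data hB.
have Mo : forall G, G \in c -> inst th G \notin o.
  move=> G Gc; apply/negP => hG; move: to; by rewrite et (match_o m Gc hG).
subst t.
pose bad H := (inst th H \in g) && (inst th H \notin r).
have [H Hq bH] : exists2 H, H \in q & bad H.
  apply: NNPP => nb; move: tr; apply/negP; apply: Hth => //.
  move=> H Hq; have dH : inst th H \in db by apply: m.
  case: (boolP (inst th H \in r)) => hr; first by right.
  left; split=> //; apply/negP => hg; apply: nb; exists H => //.
  by rewrite /bad hg hr.
have Hc : H \in c.
  have [ac _] := Hgc (proj1 (andP bH)).
  case/atom_inP: ac => H' H'c e; have -> // : H = H'.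
  by apply: sjf_eq => //; apply: c_sub.
have nbF : ~~ bad F by rewrite /bad tr andbF.
have cyc : fcycle (next c) (rot (index F c) c) by rewrite rot_cycle cycle_next // c_uniq.
move: cyc; rewrite rot_index // => cyc.
set cs := drop _ _ ++ take _ _ in cyc.
have memcs : forall G, G \in cs -> G \in c.
  by move=> G hG; rewrite -(mem_rot (index F c)) rot_index // inE hG orbT.
have Hcs : H \in cs.
  move: Hc; rewrite -(mem_rot (index F c)) rot_index // inE => /orP[/eqP e|//].
  by move: nbF; rewrite -e bH.
have hb : has bad cs by apply/hasP; exists H.
have [pre [H' [post [ecs [bH' nb]]]]] := split_first hb.
have H'c : H' \in c by apply: memcs; rewrite ecs mem_cat inE eqxx orbT.
have [rho rr kr] := repair_cover Hr (proj1 (andP bH')).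
have rdb : rho \in db by apply/Hgdb/r_g.
have Wa : forall a, a \in c -> ~~ bad a -> Wb (inst th a).
  move=> a ac na0; apply/and3P; split; [apply: m; exact: c_sub|exact: Mo|].
  by move: na0; rewrite /bad negb_and negbK orbC.
have allnb : forall a, a \in F :: pre -> (a \in c) && ~~ bad a.
  move=> a; rewrite inE => /orP[/eqP->|ha]; first by rewrite Fc nbF.
  rewrite memcs ?ecs ?mem_cat ?ha //=.
  by apply/negP => ba; move/hasP: nb; apply; exists a.
have /andP[lc na] := allnb _ (mem_last F pre).
have rno : rho \notin o.
  apply/negP => ro; move/negP: (Mo _ H'c); apply; apply: (o_5 ro).
    apply: m; exact: c_sub.
  exact: keyeq_sym kr.
exists (rcons (map (inst th) pre) rho); split.
- move: cyc; rewrite /= ecs rcons_path -cat_rcons cat_path => /andP[/andP[p1 _] _].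
  rewrite rcons_path; apply/andP; split.
  + rewrite path_map; move: p1; rewrite rcons_path => /andP[p1 lastH'].
    apply: (sub_in_path (P := fun a => (a \in c) && ~~ bad a)); last exact: p1.
      move=> a b /andP[ac na0] /andP[bc nb'] /eqP eb /=; apply/asbP.
      split; first by rewrite -eb; apply: match_hookC.
      by split; apply: Wa.
    by apply/allP => a ha; apply: allnb.
  + move: p1; rewrite rcons_path => /andP[_ /eqP lastH'].
    rewrite last_map; apply/asbP.
    split.
      apply: hookC_keyeq _ rdb kr; rewrite -lastH'; exact: match_hookC.
    split.
      exact: Wa.
    by apply/and3P; split; rewrite ?rr.
- by case: (map _ _).
- by rewrite last_rcons /Tt rr.
Qed.


Lemma path_Wb x s : path Eb x s -> all Wb s.
Proof.
elim: s x => [|y s IH] x //= /andP[/asbP [_ [_ wy]] p]; by rewrite wy (IH y).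
Qed.

Lemma Eb_hC a b : Eb a b -> hC a b.
Proof. by move/asbP=> []. Qed.

Lemma Tt_Wb t : Tt t -> Wb t.
Proof.
case/andP=> tr to; apply/and3P; split; rewrite ?tr //.
exact/Hgdb/r_g.
Qed.

Lemma closed_walk t0 : Tt t0 -> exists Y0 rest, Tt Y0 /\ cycle Eb (Y0 :: rest).
Proof.
move=> T0.
pose Rc a b := exists s, [/\ s != [::], path Eb a s & last a s = b].
have tr : forall a b d, Rc a b -> Rc b d -> Rc a d.
  move=> a b d [s1 [n1 p1 l1]] [s2 [n2 p2 l2]]; exists (s1 ++ s2); split.
  - by case: (s1) n1.
  - by rewrite cat_path p1 l1 p2.
  - by rewrite last_cat l1.
pose U := [seq t <- r | Tt t].
have [t tU [s [ns p ls]]] : exists2 t, t \in U & Rc t t.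
  apply: (@reach_cycle _ Rc tr (size U) U (leqnn _) _ t0).
  - move=> t; rewrite mem_filter => /andP[Tt_t _].
    have [s [p ns ls]] := step Tt_t; exists (last t s); last by exists s.
    by rewrite mem_filter ls; case/andP: ls.
  - by rewrite mem_filter T0; case/andP: T0.
move: tU; rewrite mem_filter => /andP[Tt_t _].
exists t; case/lastP: s ns p ls => [//|rest z] _ p; rewrite last_rcons => ez.
by subst z; exists rest; split.
Qed.

Lemma good_walk n Y0 rest : size rest <= n -> Tt Y0 -> cycle Eb (Y0 :: rest) ->
  exists Y1 rest', [/\ Tt Y1, cycle Eb (Y1 :: rest'), uniq (Y1 :: rest') &
     forall A B, A \in Y1 :: rest' -> B \in Y1 :: rest' -> keyeq S A B -> A = B].
Proof.
elim: n Y0 rest => [|n IH] Y0 rest.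
- rewrite leqn0 => /nilP -> T0 cy; exists Y0, [::]; split => //.
  by move=> A B; rewrite !inE => /eqP-> /eqP->.
move=> sz T0 cy.
case: (classic (exists a b d A B, Y0 :: rest = a ++ A :: b ++ B :: d /\ keyeq S A B)); last first.
  move/(nodecomp keyeq_refl keyeq_sym) => [u kf]; by exists Y0, rest.
move=> [a [b [d [A [B [e k]]]]]].
have allW : all Wb (rcons rest Y0) := path_Wb cy.
case: a e => [|Y a'] /= [eA er].
- subst A rest.
  have WB : Wb B by apply: (allP allW); rewrite mem_rcons inE mem_cat mem_head !orbT.
  have eB : Y0 = B.
    case/and3P: WB => Bdb _ /orP[Br|Bg].
      by case: Hr => _ [cr _]; apply: cr => //; case/andP: T0.
    have [_ bl] := Hgc (r_g (proj1 (andP T0))).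
    by move: Bg; rewrite bl.
  subst B; apply: (IH Y0 d) => //.
    by move: sz; rewrite !size_cat /= ?size_cat /=; lia.
  move: cy; rewrite /= rcons_cat cat_path => /andP[_] /= /andP[_ p]; exact: p.
- subst rest.
  apply: (IH Y0 (a' ++ B :: d)) => //.
    by move: sz; rewrite !size_cat /= ?size_cat /=; lia.
  move: cy; rewrite /= !rcons_cat !cat_path /= !rcons_cat cat_path /= => /andP[p1 /andP[eA2 /andP[_ /andP[_ p2]]]].
  rewrite p1 p2 !andbT; apply/asbP; move/asbP: eA2 => [h [w1 w2]].
  have WB : Wb B.
    by apply: (allP allW); rewrite mem_rcons inE mem_cat inE mem_cat mem_head !orbT.
  split; last by [].
  by apply: hookC_keyeq h _ k; case/and3P: WB.
Qed.


Lemma walk_Wb Y0 rest : Tt Y0 -> cycle Eb (Y0 :: rest) -> all Wb (Y0 :: rest).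
Proof.
move=> T0 cy; rewrite /= Tt_Wb //=; have := path_Wb cy.
by rewrite all_rcons => /andP[].
Qed.

Lemma no_good Y0 rest : Tt Y0 -> cycle Eb (Y0 :: rest) -> uniq (Y0 :: rest) ->
  (forall A B, A \in Y0 :: rest -> B \in Y0 :: rest -> keyeq S A B -> A = B) ->
  False.
Proof.
move=> T0 cy u kf.
have hcyc : cycleP hC (Y0 :: rest).
  apply/cycleP_cycle; apply: sub_cycle cy => a b /asbP [h _]; by apply/asbP.
have inw : forall A, A \in Y0 :: rest -> A \in db /\ atom_in c A.
  move=> A hA; have := cycleP_next hcyc u hA.
  by case/hookC_data.
have Y0c : atom_in c Y0 by case: (inw Y0 (mem_head _ _)).
have e := path_idx Eb_hC Y0c cy.
rewrite last_rcons size_rcons in e.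
have dv : (size rest).+1 %% size c = 0.
  have : (idx Y0 + 0) %% size c = (idx Y0 + (size rest).+1) %% size c.
    by rewrite addn0 -e modn_small // idx_lt.
  by move/eqP; rewrite eqn_modDl mod0n => /eqP <-.
have kpos : 0 < size c by apply: leq_trans Hc2.
pose n := (size (Y0 :: rest)) %/ size c.
have sz : size (Y0 :: rest) = n * size c.
  by rewrite /n divnK //; apply/dvdnP; exists ((size rest).+1 %/ size c); rewrite /= divnK // /dvdn dv.
have n1 : 1 <= n.
  rewrite lt0n; apply/eqP => n0; move: sz; by rewrite n0.
have emb : embedding S q c db n (Y0 :: rest).
  split=> //; split=> //; split=> //.
have Y0no : Y0 \notin o by case/andP: T0.
have AllW := walk_Wb T0 cy.
case: (leqP 2 n) => [n2|].
  by move: Y0no; rewrite (o_3 n2 emb) ?mem_head.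
rewrite ltnS => nl1; have en : n = 1 by apply/eqP; rewrite eqn_leq nl1 n1.
rewrite en in emb.
case: (classic (relevant q db (Y0 :: rest))) => [[th [m hw]]|nrel]; last first.
  by move: Y0no; rewrite (o_2 emb nrel) ?mem_head.
have sub : {subset Y0 :: rest <= map (inst th) c}.
  move=> A hA; have [F Fq eF] := hw A hA.
  have [_ ac] := inw A hA; case/atom_inP: ac => F' F'c e'.
  have eFF : F = F' by apply: sjf_eq => //; [exact: c_sub|rewrite e' eF].
  by rewrite eF eFF map_f.
have szl : size (map (inst th) c) <= size (Y0 :: rest) by rewrite size_map sz en mul1n.
have [_ eqw] := uniq_min_size u sub szl.
have Y0r : Y0 \in r by case/andP: T0.
have [F Fc eY] : exists2 F, F \in c & Y0 = inst th F.
  by move/mapP: (sub Y0 (mem_head _ _)) => [F Fc ->]; exists F.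
have embth : embeds_in q th (fun X => (X \in db /\ X \notin g) \/ X \in r).
  move=> G Gq; have Gdb : inst th G \in db by apply: m.
  case: (boolP (inst th G \in g)) => Gg; last by left.
  right; have [ac _] := Hgc Gg.
  case/atom_inP: ac => G' G'c e'.
  have eG : G = G' by apply: (sjf_eq Gq (c_sub G'c)); rewrite e'.
  have : inst th G \in Y0 :: rest by rewrite eqw eG map_f.
  move/(allP AllW); case/and3P => _ _ /orP[//|]; by rewrite Gg.
move: Y0r; rewrite eY; apply/negP; exact: Hth embth F Fc.
Qed.

Lemma garbage_sub_aux : {subset g <= o}.
Proof.
move=> X0 X0g; apply: NNPP => /negP X0o.
have [X Xr kX] := repair_cover Hr X0g.
have TX : Tt X.
  rewrite /Tt Xr /=; apply/negP => Xo; move/negP: X0o; apply.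
  apply: (o_5 Xo); [exact: Hgdb|exact: keyeq_sym].
have [Y0 [rest [T0 cy]]] := closed_walk TX.
have [Y1 [rest' [T1 cy1 u kf]]] := good_walk (leqnn _) T0 cy.
exact: no_good T1 cy1 u kf.
Qed.

End Max.

Lemma garbage_sub g : garbage S q c db g -> {subset g <= o}.
Proof.
case=> gdb [gc [r [Hr Hth]]]; exact: garbage_sub_aux gdb gc Hr Hth.
Qed.


Lemma o_atom A : A \in o -> atom_in c A.
Proof.
move=> Ao.
pose o' := [seq X <- o | atom_in c X].
suff : A \in o' by rewrite mem_filter => /andP[].
case: Hmin => co mn; apply: (mn o') => //.
  by move=> X; rewrite mem_filter => /andP[].
split; first by move=> X; rewrite mem_filter => /andP[_ /o_db].
split; first by move=> X Xdb Xc ns; rewrite mem_filter Xc o_1.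
split.
  move=> e em nr X Xe; rewrite mem_filter (o_2 em nr Xe).
  by case: em => _ [_ [_ [h _]]]; case: (h X Xe) => _ ->.
split.
  move=> n e n2 em X Xe; rewrite mem_filter (o_3 n2 em Xe).
  by case: em => _ [_ [_ [h _]]]; case: (h X Xe) => _ ->.
split.
  move=> e em rel hs X Xe; rewrite mem_filter (o_4 em rel _ Xe).
    by case: em => _ [_ [_ [h _]]]; case: (h X Xe) => _ ->.
  case/hasP: hs => Y Ye; rewrite mem_filter => /andP[_ Yo]; apply/hasP; by exists Y.
move=> X; rewrite mem_filter => /andP[Xc Xo] B Bdb k.
rewrite mem_filter (o_5 Xo Bdb k) andbT.
by move: Xc; rewrite /atom_in (keyeq_rel k).
Qed.

Lemma hC_rel A B : hC A B -> frel A <> frel B.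
Proof.
case=> _ [_ [_ [_ [[_ [th [F [G [_ [[Fq [Gq [nFG _]]] [eA kB]]]]]]] _]]]] e.
apply: nFG; apply: sjf_eq => //.
by rewrite -(inst_rel th F) -(inst_rel th G) -eA e (keyeq_rel kB).
Qed.

Definition cov (P : seq fct) A := has (keyeq S A) P.

Definition Inv (P : seq fct) :=
  [/\ {subset P <= o}, consistent S P,
      (forall A B, A \in P -> hC A B -> cov P B) &
      (forall th, mtch th -> ~ (forall F, F \in c -> inst th F \in P))].

Definition seed n e := embedding S q c db n e /\ (2 <= n \/ (n = 1 /\ ~ relevant q db e)).

Lemma seed_o n e : seed n e -> {subset e <= o}.
Proof.
case=> em [n2|[n1 nr]]; first exact: o_3 n2 em.
by subst n; apply: o_2.
Qed.

Lemma cov_sub P P' A : {subset P <= P'} -> cov P A -> cov P' A.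
Proof. move=> s /hasP[B hB k]; apply/hasP; exists B => //; exact: s. Qed.

Lemma cov_keyeq P A B : keyeq S A B -> cov P B -> cov P A.
Proof. move=> k /hasP[X hX k']; apply/hasP; exists X => //; exact: keyeq_trans k k'. Qed.

Lemma cov_mem P A : A \in P -> cov P A.
Proof. move=> h; apply/hasP; exists A => //; exact: keyeq_refl. Qed.

Lemma add_one P A : Inv P -> A \in o -> ~~ cov P A ->
  (forall B, hC A B -> cov P B) -> Inv (A :: P).
Proof.
move=> [sP cP clP nmP] Ao nA sA; split.
- by move=> X; rewrite inE => /orP[/eqP->|/sP].
- move=> X Y; rewrite !inE => /orP[/eqP->|hX] /orP[/eqP->|hY] k //.
  + by case/negP: nA; apply/hasP; exists Y.
  + by case/negP: nA; apply/hasP; exists X => //; apply: keyeq_sym.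
  + exact: cP.
- move=> X B; rewrite inE => /orP[/eqP->|hX] h.
    by apply: (cov_sub (P := P)) => [x hx|]; rewrite ?inE ?hx ?orbT //; apply: sA.
  by apply: (cov_sub (P := P)) => [x hx|]; rewrite ?inE ?hx ?orbT //; apply: clP h.
- move=> th m all.
  case: (classic (exists2 F, F \in c & inst th F = A)) => [[F Fc eF]|nF]; last first.
    apply: (nmP th m) => F Fc; move: (all F Fc); rewrite inE => /orP[/eqP e|//].
    by case: nF; exists F.
  have Gc : prev c F \in c by rewrite mem_prev.
  have h := match_hookC m Gc; rewrite next_prev ?c_uniq // eF in h.
  move: (all _ Gc); rewrite inE => /orP[/eqP e|hG].
    by rewrite e in h; apply: (hC_rel h).
  by case/negP: nA; apply: clP hG h.
Qed.


Lemma add_seed P n e : Inv P -> seed n e -> (forall A, A \in e -> ~~ cov P A) ->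
  Inv (e ++ P).
Proof.
move=> [sP cP clP nmP] sd nc.
have eo := seed_o sd.
have [em styp] := sd.
have [ue [sze [pos [inE' [cyc kf]]]]] := em.
split.
- by move=> X; rewrite mem_cat => /orP[/eo|/sP].
- move=> X Y; rewrite !mem_cat => /orP[hX|hX] /orP[hY|hY] k.
  + exact: kf.
  + by case/negP: (nc X hX); apply/hasP; exists Y.
  + by case/negP: (nc Y hY); apply/hasP; exists X => //; apply: keyeq_sym.
  + exact: cP.
- move=> X B; rewrite mem_cat => /orP[hX|hX] h.
    have hn := cycleP_next cyc ue hX.
    apply: (cov_keyeq (hook_unique h hn)); apply: cov_mem.
    by rewrite mem_cat mem_next hX.
  by apply: (cov_sub (P := P)) => [x hx|]; rewrite ?mem_cat ?hx ?orbT //; apply: clP h.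
- move=> th m all.
  have [F Fc Fe] : exists2 F, F \in c & inst th F \in e.
    apply: NNPP => nF; apply: (nmP th m) => G Gc.
    move: (all G Gc); rewrite mem_cat => /orP[hG|//]; by case: nF; exists G.
  have alle : forall G, G \in c -> inst th G \in e.
    move=> G Gc; apply: NNPP => /negP nG.
    have step : forall a b, a \in c -> b \in c -> b = next c a ->
        inst th a \notin e -> inst th b \notin e.
      move=> a b ac bc -> na.
      have hab := match_hookC m ac.
      move: (all a ac); rewrite mem_cat (negbTE na) /= => aP.
      have cb := clP _ _ aP hab.
      by apply/negP => be; case/negP: (nc _ be).
    have := cycle_fwd (cycle_next_P c_uniq) step Gc nG Fc.
    by rewrite Fe.
  have sub : {subset e <= map (inst th) c}.
    move=> X Xe.
    have step : forall a b, a \in e -> b \in e -> b = next e a ->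
        a \in map (inst th) c -> b \in map (inst th) c.
      move=> a b ae be -> /mapP[G Gc ea].
      have h1 := cycleP_next cyc ue ae.
      have h2 := match_hookC m Gc; rewrite -ea in h2.
      have k := hook_unique h1 h2.
      have -> : next e a = inst th (next c G).
        apply: kf => //; first by rewrite mem_next.
        by apply: alle; apply: next_in.
      by apply: map_f; apply: next_in.
    exact: (cycle_fwd (cycle_next_P ue) step Fe (map_f _ Fc) Xe).
  have szl : size (map (inst th) c) <= size e.
    rewrite size_map sze; case: (n) sze pos => [|n'] -> //.
    by rewrite mulSn leq_addr.
  have [sz _] := uniq_min_size ue sub szl.
  have n1 : n = 1.
    have kpos : 0 < size c by apply: leq_trans Hc2.
    have : n * size c = 1 * size c by rewrite mul1n -sze sz size_map.
    move/eqP; rewrite eqn_mul2r => /orP[/eqP k0|/eqP //].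
    by move: kpos; rewrite k0.
  case: styp => [n2|[_ nr]]; first by move: n2; rewrite n1.
  apply: nr; exists th; split=> // A Ae.
  by move/mapP: (sub A Ae) => [F' F'c ->]; exists F' => //; apply: c_sub.
Qed.


Lemma emb_cov P n e : embedding S q c db n e -> {subset e <= o} ->
  (forall X Y, X \in o -> hC X Y -> cov P Y -> cov P X) ->
  (exists2 X, X \in e & cov P X) -> forall z, z \in e -> cov P z.
Proof.
move=> [ue [_ [_ [_ [cyc _]]]]] eo K [X Xe cX] z ze; apply: NNPP => /negP nz.
have step : forall a b, a \in e -> b \in e -> hC a b -> ~~ cov P a -> ~~ cov P b.
  move=> a b ae be h na; apply/negP => cb; case/negP: na; exact: K (eo a ae) h cb.
have := cycle_fwd cyc step ze nz Xe; by rewrite cX.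
Qed.

Lemma extend n P : count (fun A => ~~ cov P A) o <= n -> Inv P ->
  exists r, Inv r /\ (forall A, A \in o -> cov r A).
Proof.
elim: n P => [|n IH] P cnt iP.
  exists P; split => // A Ao; apply: NNPP => /negP nA.
  move: cnt; rewrite leqn0 -/(nilp _) => cnt0.
  have : has (fun A => ~~ cov P A) o by apply/hasP; exists A.
  by rewrite has_count; move/eqP: cnt0 => ->.
case: (classic (forall A, A \in o -> cov P A)) => [allc|nall]; first by exists P.
case: (classic (exists A, [/\ A \in o, ~~ cov P A & forall B, hC A B -> cov P B]))
  => [[A [Ao nA sA]]|n1].
  apply: (IH (A :: P)); last exact: add_one iP Ao nA sA.
  rewrite -ltnS; apply: leq_trans cnt; apply: sub_count_lt.
    move=> x _; apply: contra; apply: cov_sub => y hy; by rewrite inE hy orbT.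
  by exists A => //; rewrite nA /= negbK keyeq_refl.
case: (classic (exists n' e, seed n' e /\ forall A, A \in e -> ~~ cov P A))
  => [[n' [e [sd nc]]]|n2].
  apply: (IH (e ++ P)); last exact: add_seed iP sd nc.
  rewrite -ltnS; apply: leq_trans cnt; apply: sub_count_lt.
    move=> x _; apply: contra; apply: cov_sub => y hy; by rewrite mem_cat hy orbT.
  have [[_ [_ [pos _]]] _] := sd.
  case: e pos sd nc => [//|X e] _ sd nc.
  exists X; first by apply: (seed_o sd); rewrite mem_head.
  apply/andP; split; first exact: nc (mem_head _ _).
  by rewrite negbK cov_mem // mem_head.
exfalso; apply: nall.
have K : forall X Y, X \in o -> hC X Y -> cov P Y -> cov P X.
  move=> X Y Xo h cY; apply: NNPP => /negP nX; apply: n1; exists X; split=> // B hB.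
  exact: cov_keyeq (keyeq_sym (hook_unique h hB)) cY.
have someC : forall n' e, seed n' e -> exists2 X, X \in e & cov P X.
  move=> n' e sd; apply: NNPP => nc; apply: n2; exists n', e; split => // A Ae.
  by apply/negP => cA; apply: nc; exists A.
pose o' := [seq A <- o | cov P A].
suff : {subset o <= o'} by move=> h A /h; rewrite mem_filter => /andP[].
case: Hmin => _ mn; apply: mn.
  by move=> X; rewrite mem_filter => /andP[].
split; first by move=> X; rewrite mem_filter => /andP[_ /o_db].
split.
  move=> X Xdb Xc ns; rewrite mem_filter o_1 // andbT.
  apply: NNPP => /negP nX; apply: n1; exists X; split=> //; first exact: o_1.
  by move=> B hB; case: (ns B hB).
split.
  move=> e em nr X Xe; have sd : seed 1 e by split=> //; right.
  rewrite mem_filter (seed_o sd Xe) andbT.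
  exact: emb_cov em (seed_o sd) K (someC _ _ sd) X Xe.
split.
  move=> n' e n2' em X Xe; have sd : seed n' e by split=> //; left.
  rewrite mem_filter (seed_o sd Xe) andbT.
  exact: emb_cov em (seed_o sd) K (someC _ _ sd) X Xe.
split.
  move=> e em rel hs.
  have hso : has (fun A => A \in o) e.
    case/hasP: hs => Y Ye; rewrite mem_filter => /andP[_ Yo]; apply/hasP; by exists Y.
  have eo := o_4 em rel hso.
  have sc : exists2 X, X \in e & cov P X.
    case/hasP: hs => Y Ye; rewrite mem_filter => /andP[cY _]; by exists Y.
  move=> X Xe; rewrite mem_filter (eo X Xe) andbT.
  exact: emb_cov em eo K sc X Xe.
move=> X; rewrite mem_filter => /andP[cX Xo] B Bdb k.
rewrite mem_filter (o_5 Xo Bdb k) andbT.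
exact: cov_keyeq (keyeq_sym k) cX.
Qed.

Lemma o_garbage : garbage S q c db o.
Proof.
have iP : Inv [::].
  split; [by []|by move=> A B|by move=> A B|].
  move=> th m all; have [F Fc] : exists F, F \in c.
    by case: (c) Hc2 => [|F c'] // _; exists F; rewrite mem_head.
  by move: (all F Fc); rewrite in_nil.
have [r [[sr cr clr nmr] covr]] := extend (leqnn _) iP.
split; first exact: o_db.
split.
  move=> A Ao; split; first exact: o_atom.
  by move=> B Bdb k; apply: o_5 Ao Bdb k.
exists r; split.
  split=> //; split=> // r' s1 s2 cr' X Xr'.
  have /hasP[B Br k] := covr X (s2 X Xr').
  by rewrite (cr' X B Xr' (s1 B Br) k).
move=> th emb F Fc; apply/negP => Fr.
have m : mtch th.
  move=> H Hq; case: (emb H Hq) => [[]//|hr]; exact/o_db/sr.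
have allo := match_o m Fc (sr _ Fr).
apply: (nmr th m) => G Gc.
case: (emb G (c_sub Gc)) => [[_ nG]|//].
by move: nG; rewrite allo.
Qed.

End WithO.

Theorem lemma19_sec o : minimal_conds S q c db o -> max_garbage S q c db o.
Proof.
move=> Hmin; split; first exact: o_garbage.
move=> o' hg; exact: (@garbage_sub o Hmin o' hg).
Qed.

End L19.

Theorem lemma19 (V D R : eqType) (S : schema R)
  (q c : seq (atom V D R)) (db o : seq (fact D R)) :
  schema_ok S ->
  sjf_query S q ->
  2 <= size c ->
  elem_mcycle S q c ->
  database S q db ->
  minimal_conds S q c db o ->
  max_garbage S q c db o.
Proof.
move=> _ h1 h2 h3 h4 h5; exact: (@lemma19_sec V D R S q c db h1 h2 h3 h4 o h5).
Qed.
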